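(* Let $G$ be a locally compact group acting without inversions on a locally finite regular tree $T$, and let $L$ be a geodesic line in $T$ satisfying: (i) for every geodesic segment $[x,y]$ of finite length in $T$ there exists $g\in G$ with $[gx,gy]\subset L$; (ii) the set-wise stabilizer $H$ of $L$ in $G$ acts transitively on the geometric edges of $L$. Then for every $n\ge 0$, restriction to $L^{n+1}$ induces an isomorphism $$\ell^\infty_{\mathcal A}(T^{n+1},\mathbb{R})^G\;\xrightarrow{\ \cong\ }\;\ell^\infty_{\mathrm{alt}}(L^{n+1},\mathbb{R})^H .$$
   Context: Identify $T$ and $L$ with their vertex sets. A tuple $(x_0,\ldots,x_n)$ of vertices is aligned if all $x_i$ lie on a common geodesic segment of $T$. $\ell^\infty_{\mathcal A}(T^{n+1},\mathbb{R})$ denotes the space of bounded alternating functions $T^{n+1}\to\mathbb{R}$ (i.e. $f(x_{\sigma(0)},\ldots,x_{\sigma(n)})=\mathrm{sgn}(\sigma)f(x_0,\ldots,x_n)$) supported on aligned tuples; $\ell^\infty_{\mathrm{alt}}(L^{n+1},\mathbb{R})$ denotes bounded alternating functions on $L^{n+1}$. The superscripts $G$, $H$ denote invariants under the diagonal action. ''Without inversions'' means no element swaps the endpoints of an edge. *)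

(* Defs.v *)
From HB Require Import structures.
From mathcomp Require Import all_boot all_order all_algebra perm.
From mathcomp Require Import all_classical all_reals topology.
From Stdlib Require Import List ZArith.

Set Implicit Arguments.
Unset Strict Implicit.
Unset Printing Implicit Defensive.
Import Order.TTheory GRing.Theory Num.Theory.
Local Open Scope ring_scope.

#[short(type="topGroupType")]
HB.structure Definition TopGroup := {G of monoid.Group G & Topological G}.

Definition locally_compact_group (G : topGroupType) : Prop :=
  [/\ continuous (fun p : G * G => monoid.mul p.1 p.2),
      continuous (fun g : G => monoid.inv g),
      hausdorff_space G &
      locally_compact [set: G]].

Section Graphs.
Variables (V : Type) (adj : V -> V -> Prop).

Fixpoint walk (x : V) (p : list V) : Prop :=
  match p with
  | nil => True
  | y :: q => adj x y /\ walk y q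
  end.

(* z lies on the geodesic segment [x,y] : z lies on a path (walk without
   repeated vertices) from x to y; in a tree such a path is unique. *)
Definition on_segment (x y z : V) : Prop :=
  exists p : list V, walk x p /\ List.last p x = y /\ NoDup (x :: p) /\
    In z (x :: p).

Definition is_tree : Prop :=
  [/\ (forall x y, adj x y -> adj y x),
      (forall x, ~ adj x x),
      (forall x y, exists p, walk x p /\ List.last p x = y) &
      (forall x p, walk x p -> NoDup (x :: p) -> (2 <= length p)%coq_nat ->
         ~ adj (List.last p x) x)].

Definition regular_of_degree (d : nat) : Prop :=
  forall v, exists s : list V, NoDup s /\ (forall w, In w s <-> adj v w) /\
    length s = d.

Definition geodesic_line (l : Z -> V) : Prop :=
  (forall k, adj (l k) (l (k + 1)%Z)) /\ (forall k k', l k = l k' -> k = k').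

End Graphs.

Section Actions.
Variables (G : topGroupType) (V : Type) (adj : V -> V -> Prop)
  (act : G -> V -> V).

Definition is_action_by_automorphisms : Prop :=
  [/\ (forall v, act (@monoid.one G) v = v),
      (forall g h v, act (monoid.mul g h) v = act g (act h v)) &
      (forall g u v, adj u v <-> adj (act g u) (act g v))].

(* continuity of the action (V discrete): vertex stabilizers are open *)
Definition continuous_action : Prop :=
  forall v, open [set g : G | act g v = v]%classic.

Definition without_inversions : Prop :=
  forall g u v, adj u v -> ~ (act g u = v /\ act g v = u).

End Actions.

Section Functions.
Variables (R : realType) (n : nat) (X : Type).

Definition bounded_fun (f : ('I_n.+1 -> X) -> R) : Prop :=
  exists M : R, forall x, `|f x| <= M.

Definition alternating (f : ('I_n.+1 -> X) -> R) : Prop :=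
  forall (s : 'S_n.+1) (x : 'I_n.+1 -> X),
    f (fun i => x (s i)) = (-1) ^+ odd_perm s * f x.

End Functions.

Definition aligned (V : Type) (adj : V -> V -> Prop) (n : nat)
  (x : 'I_n.+1 -> V) : Prop :=
  exists a b, forall i, on_segment adj a b (x i).

Definition on_line (V : Type) (l : Z -> V) (v : V) : Prop := exists k, l k = v.

Definition stabilizes_line (G : topGroupType) (V : Type) (act : G -> V -> V)
  (l : Z -> V) (g : G) : Prop :=
  forall v, on_line l (act g v) <-> on_line l v.

Definition linf_A_inv (R : realType) (n : nat) (G : topGroupType) (V : Type)
  (adj : V -> V -> Prop) (act : G -> V -> V) (f : ('I_n.+1 -> V) -> R) : Prop :=
  [/\ bounded_fun f, alternating f,
      (forall x, ~ aligned adj x -> f x = 0) &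
      (forall g x, f (fun i => act g (x i)) = f x)].

Definition line_vertex (V : Type) (l : Z -> V) := {v : V | on_line l v}.

Definition linf_alt_inv (R : realType) (n : nat) (G : topGroupType) (V : Type)
  (act : G -> V -> V) (l : Z -> V) (F : ('I_n.+1 -> line_vertex l) -> R) : Prop :=
  [/\ bounded_fun F, alternating F &
      (forall h, stabilizes_line act l h ->
        forall y z : 'I_n.+1 -> line_vertex l,
          (forall i, proj1_sig (z i) = act h (proj1_sig (y i))) -> F z = F y)].

Definition restrict_to_line (R : realType) (n : nat) (V : Type) (l : Z -> V)
  (f : ('I_n.+1 -> V) -> R) : ('I_n.+1 -> line_vertex l) -> R :=
  fun y => f (fun i => proj1_sig (y i)).
Arguments restrict_to_line {R n V} l f y.

(* Main.v *)
Require Import Defs.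
From HB Require Import structures.
From mathcomp Require Import all_boot all_order all_algebra perm.
From mathcomp Require Import all_classical all_reals topology.
From Stdlib Require Import List ZArith Lia.
Import Order.TTheory GRing.Theory Num.Theory.
Local Open Scope ring_scope.
Set Implicit Arguments.
Unset Strict Implicit.

Lemma act_invK {G : topGroupType} {V} {adj : V -> V -> Prop} {act : G -> V -> V} :
  is_action_by_automorphisms adj act ->
  forall g v, act (monoid.inv g) (act g v) = v.
Proof. by case=> h1 h2 _ g v; rewrite -h2 monoid.mulVg h1. Qed.

Lemma act_Kinv {G : topGroupType} {V} {adj : V -> V -> Prop} {act : G -> V -> V} :
  is_action_by_automorphisms adj act ->
  forall g v, act g (act (monoid.inv g) v) = v.
Proof. by case=> h1 h2 _ g v; rewrite -h2 monoid.mulgV h1. Qed.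

Lemma act_inj {G : topGroupType} {V} {adj : V -> V -> Prop} {act : G -> V -> V} :
  is_action_by_automorphisms adj act ->
  forall g u v, act g u = act g v -> u = v.
Proof. move=> Ha g u v e; by rewrite -(act_invK Ha g u) e (act_invK Ha). Qed.

Fixpoint zpath V (w : Z -> V) (c : Z) (N : nat) : list V :=
  match N with O => nil | S N' => w (c + 1)%Z :: zpath w (c + 1)%Z N' end.

Lemma zpath_walk V (adj : V -> V -> Prop) (w : Z -> V) :
  (forall i, adj (w i) (w (i + 1)%Z)) -> forall N c, walk adj (w c) (zpath w c N).
Proof. move=> hw; elim=> [|N IH] c /=; first done. split; [exact: hw | exact: IH]. Qed.

Lemma last_cons V (a : V) (l : list V) d : List.last (a :: l) d = List.last l a.
Proof.
elim: l a => [|x l IH] a //=.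
by move: IH; case: l => [|y l] //= IH; rewrite IH.
Qed.

Lemma zpath_last V (w : Z -> V) N c : List.last (zpath w c N) (w c) = w (c + Z.of_nat N)%Z.
Proof.
elim: N c => [|N IH] c; first by rewrite /= Z.add_0_r.
change (zpath w c N.+1) with (w (c+1)%Z :: zpath w (c+1)%Z N).
rewrite last_cons IH; congr w; lia.
Qed.

Lemma zpath_len V (w : Z -> V) N c : length (zpath w c N) = N.
Proof. by elim: N c => [|N IH] c //=; rewrite IH. Qed.

Lemma zpath_In V (w : Z -> V) N c z : In z (zpath w c N) ->
  exists m, (1 <= m <= Z.of_nat N)%Z /\ z = w (c + m)%Z.
Proof.
elim: N c => [|N IH] c //= [<-|/IH [m [hm ->]]].
  by exists 1%Z; split; [lia|].
exists (m + 1)%Z; split; [lia|]; congr w; lia.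
Qed.

Lemma zpath_In2 V (w : Z -> V) N c j : (c <= j <= c + Z.of_nat N)%Z ->
  In (w j) (w c :: zpath w c N).
Proof.
elim: N c => [|N IH] c hj /=.
  by left; congr w; lia.
have [->|ne] := Z.eq_dec j c; first by left.
right; apply: IH; lia.
Qed.

Lemma zpath_NoDup V (w : Z -> V) : (forall i j, w i = w j -> i = j) ->
  forall N c, NoDup (w c :: zpath w c N).
Proof.
move=> inj; elim=> [|N IH] c /=; first by constructor; [|constructor].
constructor; last exact: IH.
move=> [e|H]; first by have := inj _ _ e; lia.
have [m [hm e]] := zpath_In H.
by have := inj _ _ e; lia.
Qed.

Lemma seg_incr V (adj : V -> V -> Prop) (w : Z -> V) :
  (forall i, adj (w i) (w (i + 1)%Z)) -> (forall i j, w i = w j -> i = j) ->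
  forall a b j, (a <= j <= b)%Z -> on_segment adj (w a) (w b) (w j).
Proof.
move=> hw inj a b j hj; exists (zpath w a (Z.to_nat (b - a))).
split; first exact: zpath_walk.
split; first by rewrite zpath_last; congr w; lia.
split; first exact: zpath_NoDup.
apply: zpath_In2; lia.
Qed.

Lemma seg_gen V (adj : V -> V -> Prop) (w : Z -> V) :
  (forall x y, adj x y -> adj y x) ->
  (forall i, adj (w i) (w (i + 1)%Z)) -> (forall i j, w i = w j -> i = j) ->
  forall a b j, ((a <= j <= b) \/ (b <= j <= a))%Z -> on_segment adj (w a) (w b) (w j).
Proof.
move=> sym hw inj a b j [hj|hj]; first exact: seg_incr.
pose w' := fun i => w (- i)%Z.
have hw' : forall i, adj (w' i) (w' (i + 1)%Z).
  by move=> i; rewrite /w'; apply: sym; have -> : (- i = - (i + 1) + 1)%Z by lia.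
have inj' : forall i j, w' i = w' j -> i = j by move=> i k /inj; lia.
have := seg_incr hw' inj' (a := (- a)%Z) (b := (- b)%Z) (j := (- j)%Z) ltac:(lia).
by rewrite /w' !Z.opp_involutive.
Qed.

Lemma line_far {V} {adj : V -> V -> Prop} {l : Z -> V} :
  is_tree adj -> geodesic_line adj l ->
  forall a b, (a + 2 <= b)%Z -> ~ adj (l b) (l a).
Proof.
case=> sym irr _ cyc [hl inj] a b hab.
have := cyc (l a) (zpath l a (Z.to_nat (b - a))) (zpath_walk hl _ a)
  (zpath_NoDup inj _ a).
rewrite zpath_len zpath_last.
have -> : (a + Z.of_nat (Z.to_nat (b - a)) = b)%Z by lia.
by apply; lia.
Qed.

Lemma line_adj {V} {adj : V -> V -> Prop} {l : Z -> V} :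
  is_tree adj -> geodesic_line adj l ->
  forall a b, adj (l a) (l b) -> (b = a + 1 \/ b = a - 1)%Z.
Proof.
move=> Ht Hl a b h.
have [sym irr _ _] := Ht.
have [hab|[hab|hab]] := Z.lt_total (a + 1) b.
- have [hab2|hab2] := Z.lt_total (a + 2) b; last first.
  + case: hab2 => [e|]; last lia.
    by exfalso; apply: (line_far Ht Hl (a := a) (b := b)); [lia| apply: sym].
  + by exfalso; apply: (line_far Ht Hl (a := a) (b := b)); [lia| apply: sym].
- by left; lia.
- have [e|ne] := Z.eq_dec b a; first by rewrite e in h; case: (irr (l a) h).
  have [e|ne2] := Z.eq_dec b (a - 1); first by right.
  by exfalso; apply: (line_far Ht Hl (a := b) (b := a)); [lia|].
Qed.

Lemma line_affine {G : topGroupType} {V} {adj : V -> V -> Prop} {act : G -> V -> V}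
  {l : Z -> V} :
  is_tree adj -> geodesic_line adj l -> is_action_by_automorphisms adj act ->
  forall (k : G) a (N : nat),
  (forall j, (a <= j <= a + Z.of_nat N)%Z -> on_line l (act k (l j))) ->
  exists c0 s, (s = 1 \/ s = -1)%Z /\
    forall j, (a <= j <= a + Z.of_nat N)%Z -> act k (l j) = l (c0 + s * (j - a))%Z.
Proof.
move=> Ht Hl Ha k a; elim=> [|N IH] hon.
  have [c0 e] := hon a ltac:(lia).
  exists c0, 1%Z; split; first by left.
  move=> j hj; have -> : j = a by lia.
  by rewrite -e; congr l; lia.
have [c0 [s [hs hk]]] := IH (fun j hj => hon j ltac:(lia)).
have [b eb] := hon (a + Z.of_nat N + 1)%Z ltac:(lia).
have [_ _ Hadj] := Ha.
have injk : forall i j, act k (l i) = act k (l j) -> i = j.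
  by move=> i j /(act_inj Ha) /(proj2 Hl).
have adjk : adj (act k (l (a + Z.of_nat N)%Z)) (act k (l (a + Z.of_nat N + 1)%Z)).
  exact: ((Hadj k _ _).1 (proj1 Hl _)).
rewrite hk in adjk; last lia.
rewrite -eb in adjk.
have hb := line_adj Ht Hl adjk.
have [N0|Npos] := Nat.eq_dec N 0.
  subst N; exists c0, (b - c0)%Z; split; first lia.
  move=> j hj; have [ja|ja] : (j = a \/ j = a + 1)%Z by lia.
    by rewrite ja hk; [congr l|]; lia.
  rewrite ja; have -> : (a + 1 = a + Z.of_nat 0 + 1)%Z by lia.
  by rewrite -eb; congr l; lia.
have hne : b <> (c0 + s * (Z.of_nat N - 1))%Z.
  move=> e; have := hk (a + Z.of_nat N - 1)%Z ltac:(lia).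
  have -> : (c0 + s * (a + Z.of_nat N - 1 - a) = c0 + s * (Z.of_nat N - 1))%Z by ring.
  rewrite -e eb => /injk; lia.
exists c0, s; split=> // j hj.
have [jle|je] : (j <= a + Z.of_nat N \/ j = a + Z.of_nat N + 1)%Z by lia.
  by apply: hk; lia.
rewrite je -eb; congr l.
by case: hs hne hb => -> hne hb; lia.
Qed.

Lemma line_H {G : topGroupType} {V} {adj : V -> V -> Prop} {act : G -> V -> V}
  {l : Z -> V} :
  is_tree adj -> geodesic_line adj l -> is_action_by_automorphisms adj act ->
  without_inversions adj act ->
  (forall k k' : Z, exists h : G, stabilizes_line act l h /\
     ((act h (l k) = l k' /\ act h (l (k + 1)%Z) = l (k' + 1)%Z) \/
      (act h (l k) = l (k' + 1)%Z /\ act h (l (k + 1)%Z) = l k'))) ->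
  forall (k : G) a b, (a < b)%Z ->
  (forall j, (a <= j <= b)%Z -> on_line l (act k (l j))) ->
  exists h, stabilizes_line act l h /\
    forall j, (a <= j <= b)%Z -> act h (l j) = act k (l j).
Proof.
move=> Ht Hl Ha Hinv Hii k a b ab hon.
have [c0 [s [hs hk]]] := @line_affine G V adj act l Ht Hl Ha k a (Z.to_nat (b - a))
  (fun j hj => hon j ltac:(lia)).
have hk0 : act k (l a) = l c0 by rewrite hk; [congr l|]; lia.
have hk1 : act k (l (a + 1)%Z) = l (c0 + s)%Z by rewrite hk; [congr l|]; lia.
have [_ Hmul _] := Ha.
have inv_contra : forall h : G, act h (l a) = act k (l (a + 1)%Z) ->
    act h (l (a + 1)%Z) = act k (l a) -> False.
  move=> h e1 e2; apply: (Hinv (monoid.mul (monoid.inv h) k) (l a) (l (a + 1)%Z)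
    (proj1 Hl a)).
  by rewrite !Hmul -e1 -e2 !(act_invK Ha).
have [h [hst [[e1 e2]|[e1 e2]]] ] : exists h : G, stabilizes_line act l h /\
     ((act h (l a) = act k (l a) /\ act h (l (a + 1)%Z) = act k (l (a + 1)%Z)) \/
      (act h (l a) = act k (l (a + 1)%Z) /\ act h (l (a + 1)%Z) = act k (l a))).
- case: hs => es; subst s.
  + have [h [hst hh]] := Hii a c0; exists h; split=> //.
    by rewrite hk0 hk1.
  + have [h [hst hh]] := Hii a (c0 - 1)%Z; exists h; split=> //.
    rewrite hk0 hk1.
    have -> : (c0 + -1 = c0 - 1)%Z by lia.
    move: hh; have -> : (c0 - 1 + 1 = c0)%Z by lia.
    by case=> [[-> ->]|[-> ->]]; [right|left].
- exists h; split=> // j hj.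
  have [c1 [s1 [hs1 hh]]] := @line_affine G V adj act l Ht Hl Ha h a (Z.to_nat (b - a))
    (fun j hj => (proj2 (hst (l j))) (ex_intro _ j erefl)).
  have f0 := hh a ltac:(lia); have f1 := hh (a + 1)%Z ltac:(lia).
  rewrite e1 hk0 in f0; rewrite e2 hk1 in f1.
  move/(proj2 Hl): f0 => f0; move/(proj2 Hl): f1 => f1.
  rewrite hh; last lia. rewrite hk; last lia.
  congr l; case: hs => es; case: hs1 => es1; subst; lia.
- by case: (inv_contra h e1 e2).
Qed.

Lemma ord_min n (f : 'I_n.+1 -> Z) : exists i0, forall i, (f i0 <= f i)%Z.
Proof.
have : forall s : list 'I_n.+1, exists i0, forall i, i \in s -> (f i0 <= f i)%Z.
  elim=> [|x s [i0 IH]]; first by exists ord0.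
  have [le|gt] := Z_le_gt_dec (f x) (f i0).
    exists x => i; rewrite inE => /orP [/eqP ->|/IH]; lia.
  exists i0 => i; rewrite inE => /orP [/eqP ->|/IH]; lia.
move=> /(_ (enum 'I_n.+1)) [i0 H]; exists i0 => i; apply: H; by rewrite mem_enum.
Qed.

Lemma stab_mul {G : topGroupType} {V} {adj : V -> V -> Prop} {act : G -> V -> V}
  {l : Z -> V} : is_action_by_automorphisms adj act ->
  forall g h, stabilizes_line act l g -> stabilizes_line act l h ->
  stabilizes_line act l (monoid.mul g h).
Proof. by case=> _ Hm _ g h hg hh v; rewrite Hm hg hh. Qed.

Lemma stab_inv {G : topGroupType} {V} {adj : V -> V -> Prop} {act : G -> V -> V}
  {l : Z -> V} : is_action_by_automorphisms adj act ->
  forall g, stabilizes_line act l g -> stabilizes_line act l (monoid.inv g).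
Proof. by move=> Ha g hg v; rewrite -hg (act_Kinv Ha). Qed.

Lemma wd {G : topGroupType} {V} {adj : V -> V -> Prop} {act : G -> V -> V}
  {l : Z -> V} :
  is_tree adj -> geodesic_line adj l -> is_action_by_automorphisms adj act ->
  without_inversions adj act ->
  (forall x y : V, exists g : G,
     forall z, on_segment adj (act g x) (act g y) z -> on_line l z) ->
  (forall k k' : Z, exists h : G, stabilizes_line act l h /\
     ((act h (l k) = l k' /\ act h (l (k + 1)%Z) = l (k' + 1)%Z) \/
      (act h (l k) = l (k' + 1)%Z /\ act h (l (k + 1)%Z) = l k'))) ->
  forall n (y : 'I_n.+1 -> V) (u : G),
  (forall i, on_line l (y i)) -> (forall i, on_line l (act u (y i))) ->
  exists h, stabilizes_line act l h /\ forall i, act h (y i) = act u (y i).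
Proof.
move=> Ht Hl Ha Hinv Hi Hii n y u hy hu.
have [sym irr _ _] := Ht.
have [_ Hmul Hadj] := Ha.
have [b hb] := choice hy.
have [i0 h0] := ord_min b; have [i1 h1] := ord_min (fun i => - b i)%Z.
have injl := proj2 Hl.
have injgl : forall g : G, forall i j, act g (l i) = act g (l j) -> i = j.
  by move=> g i j /(act_inj Ha) /injl.
have walkg : forall g : G, forall i, adj (act g (l i)) (act g (l (i + 1)%Z)).
  by move=> g i; exact: ((Hadj _ _ _).1 (proj1 Hl _)).
have [ac|ac] := Z.eq_dec (b i0) (b i1); last first.
- set a := b i0; set c := b i1.
  have ac' : (a < c)%Z by have := h0 i1; have := h1 i0; rewrite -/a -/c; lia.
  have [ca eca] := hu i0; have [cb ecb] := hu i1.
  rewrite -hb -/a in eca; rewrite -hb -/c in ecb.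
  have [g hg] := Hi (act u (l a)) (act u (l c)).
  have hgu : forall j, (a <= j <= a + Z.of_nat (Z.to_nat (c - a)))%Z ->
      on_line l (act (monoid.mul g u) (l j)).
    move=> j hj; rewrite Hmul; apply: hg.
    apply: (@seg_gen V adj (fun j => act g (act u (l j)))) => //; last lia.
    - by move=> i; exact: ((Hadj _ _ _).1 ((Hadj _ _ _).1 (proj1 Hl _))).
    - by move=> i k /(act_inj Ha) /(act_inj Ha) /injl.
  have [c1 [s1 [hs1 hgu']]] := line_affine Ht Hl Ha hgu.
  pose m := Z.min ca cb.
  have hgl : forall e, (m <= e <= m + Z.of_nat (Z.to_nat (Z.abs (cb - ca))))%Z ->
      on_line l (act g (l e)).
    move=> e he; apply: hg; rewrite -eca -ecb.
    apply: (@seg_gen V adj (fun j => act g (l j))) => //; last lia.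
    by move=> i k /(act_inj Ha) /injl.
  have [c2 [s2 [hs2 hg']]] := line_affine Ht Hl Ha hgl.
  have f1 : c1 = (c2 + s2 * (ca - m))%Z.
    have := hgu' a ltac:(lia); rewrite Hmul -eca hg'; last lia.
    by move/injl; case: hs1 => ->; case: hs2 => ->; lia.
  have f2 : (c1 + s1 * (c - a) = c2 + s2 * (cb - m))%Z.
    have := hgu' c ltac:(lia); rewrite Hmul -ecb hg'; last lia.
    by move/injl; case: hs1 => ->; case: hs2 => ->; lia.
  have hul : forall j, (a <= j <= c)%Z -> on_line l (act u (l j)).
    move=> j hj.
    pose mj := (c1 + s1 * (j - a))%Z.
    pose e := (m + s2 * (mj - c2))%Z.
    have he : (m <= e <= m + Z.of_nat (Z.to_nat (Z.abs (cb - ca))))%Z.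
      rewrite /e /mj /m; case: hs1 f1 f2 => ->; case: hs2 => -> f1 f2; lia.
    exists e; apply: (act_inj Ha (g := g)).
    rewrite hg' // -Hmul hgu'; last lia.
    congr l; rewrite /e /mj; case: hs2 => ->; lia.
  have [h [hst hh]] := line_H Ht Hl Ha Hinv Hii ac' hul.
  exists h; split=> // i; rewrite -hb; apply: hh.
  by have := h0 i; have := h1 i; rewrite -/a -/c; lia.
- pose p := b i0.
  have yp : forall i, y i = l p.
    by move=> i; rewrite -hb /p; congr l; have := h0 i; have := h1 i; lia.
  have [p' ep'] := hu i0; rewrite yp in ep'.
  pose w := act u (l (p + 1)%Z).
  have adjw : adj (l p') w by rewrite ep'; exact: ((Hadj _ _ _).1 (proj1 Hl _)).
  have [q [hq qw]] : exists q, (q = p' + 1 \/ q = p' - 1)%Z /\ l q <> w.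
    have [ew|new] := pselect (w = l (p' + 1)%Z); last first.
      by exists (p' + 1)%Z; split; [left | move=> e; apply: new; rewrite e].
    exists (p' - 1)%Z; split; first by right.
    by rewrite ew => /injl; lia.
  have [g hg] := Hi (l q) w.
  have adjqp : adj (l q) (l p').
    case: hq => ->; first by apply: sym; apply: (proj1 Hl).
    by have := proj1 Hl (p' - 1)%Z; rewrite Z.sub_add.
  have seg : forall z, In z [:: act g (l q); act g (l p'); act g w] ->
      on_segment adj (act g (l q)) (act g w) z.
    move=> z hz; exists [:: act g (l p'); act g w]; split.
      by split; [exact: ((Hadj _ _ _).1 adjqp)|split; [exact: ((Hadj _ _ _).1 adjw)|]].
    split=> //; split=> //.
    have nqp : l q <> l p' by move/injl; lia.
    have npw : l p' <> w by move=> e; apply: (irr (l p')); rewrite {2}e.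
    constructor.
      by move=> /= [e|[e|[]]]; [apply: nqp | apply: qw]; exact: (esym (act_inj Ha e)).
    constructor; last by constructor; [|constructor].
    by move=> /= [e|[]]; apply: npw; exact: (esym (act_inj Ha e)).
  have onq := hg _ (seg _ (or_introl erefl)).
  have onp := hg _ (seg _ (or_intror (or_introl erefl))).
  have onw := hg _ (seg _ (or_intror (or_intror (or_introl erefl)))).
  have on1 : forall j, (p <= j <= p + 1)%Z -> on_line l (act (monoid.mul g u) (l j)).
    move=> j hj; have [->|->] : (j = p \/ j = p + 1)%Z by lia.
      by rewrite Hmul -ep'.
    by rewrite Hmul.
  have [k1 [hst1 hh1]] := line_H Ht Hl Ha Hinv Hii (ltac:(lia) : (p < p + 1)%Z) on1.
  have on2 : forall j, (Z.min q p' <= j <= Z.min q p' + 1)%Z -> on_line l (act g (l j)).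
    by move=> j hj; have [->|->] : (j = q \/ j = p')%Z by lia.
  have [k2 [hst2 hh2]] := line_H Ht Hl Ha Hinv Hii
    (ltac:(lia) : (Z.min q p' < Z.min q p' + 1)%Z) on2.
  exists (monoid.mul (monoid.inv k2) k1); split.
    by apply: (stab_mul Ha) => //; apply: (stab_inv Ha).
  move=> i; rewrite yp Hmul hh1; last lia.
  rewrite Hmul -ep' -hh2; last lia.
  by rewrite (act_invK Ha).
Qed.

Lemma map_walk {V} {adj : V -> V -> Prop} (f : V -> V) :
  (forall u v, adj u v -> adj (f u) (f v)) ->
  forall p x, walk adj x p -> walk adj (f x) (List.map f p).
Proof. by move=> hf; elim=> [|y p IH] x //= [h1 h2]; split; [apply: hf|apply: IH]. Qed.

Lemma map_last {V} (f : V -> V) p x : List.last (List.map f p) (f x) = f (List.last p x).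
Proof.
elim: p x => [|y p IH] x; first by [].
by change (List.map f (y :: p)) with (f y :: List.map f p); rewrite !last_cons IH.
Qed.

Lemma map_NoDup {V} (f : V -> V) : (forall u v, f u = f v -> u = v) ->
  forall s, NoDup s -> NoDup (List.map f s).
Proof.
move=> inj s; elim=> [|x s' nx _ IH] /=; constructor=> //.
by move/in_map_iff=> [y [/inj e hy]]; apply: nx; rewrite -e.
Qed.

Lemma seg_act {G : topGroupType} {V} {adj : V -> V -> Prop} {act : G -> V -> V} :
  is_action_by_automorphisms adj act ->
  forall g a b z, on_segment adj a b z -> on_segment adj (act g a) (act g b) (act g z).
Proof.
move=> Ha g a b z [p [hw [hl [hn hi]]]].
have [_ _ Hadj] := Ha.
exists (List.map (act g) p); split.
  by apply: map_walk => // u v; apply: (proj1 (Hadj g u v)).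
split; first by rewrite map_last hl.
split; first by have := map_NoDup (fun u v (e : act g u = act g v) => act_inj Ha e) hn.
by apply: (in_map (act g) (a :: p)).
Qed.

Lemma line_aligned {G : topGroupType} {V} {adj : V -> V -> Prop} {act : G -> V -> V}
  {l : Z -> V} :
  is_tree adj -> geodesic_line adj l -> is_action_by_automorphisms adj act ->
  forall n (x : 'I_n.+1 -> V) (g : G), (forall i, on_line l (act g (x i))) ->
  aligned adj x.
Proof.
move=> Ht Hl Ha n x g hx.
have [sym _ _ _] := Ht; have [_ _ Hadj] := Ha.
have [b hb] := choice hx.
have [i0 h0] := ord_min b; have [i1 h1] := ord_min (fun i => - b i)%Z.
exists (act (monoid.inv g) (l (b i0))), (act (monoid.inv g) (l (b i1))) => i.
have -> : x i = act (monoid.inv g) (l (b i)) by rewrite hb (act_invK Ha).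
apply: (@seg_gen V adj (fun j => act (monoid.inv g) (l j))) => //.
- by move=> j; exact: ((Hadj _ _ _).1 (proj1 Hl _)).
- by move=> j k /(act_inj Ha) /(proj2 Hl).
- by left; have := h0 i; have := h1 i; lia.
Qed.

Theorem mainTheorem6 (R : realType) (G : topGroupType) (V : Type)
  (adj : V -> V -> Prop) (d : nat) (act : G -> V -> V) (l : Z -> V) (n : nat) :
  locally_compact_group G ->
  is_tree adj -> regular_of_degree adj d ->
  is_action_by_automorphisms adj act -> continuous_action act ->
  without_inversions adj act ->
  geodesic_line adj l ->
  (forall x y : V, exists g : G,
     forall z, on_segment adj (act g x) (act g y) z -> on_line l z) ->
  (forall k k' : Z, exists h : G, stabilizes_line act l h /\
     ((act h (l k) = l k' /\ act h (l (k + 1)%Z) = l (k' + 1)%Z) \/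
      (act h (l k) = l (k' + 1)%Z /\ act h (l (k + 1)%Z) = l k'))) ->
  [/\ (forall f : ('I_n.+1 -> V) -> R, linf_A_inv adj act f ->
         linf_alt_inv act (restrict_to_line l f)),
      (forall f1 f2 : ('I_n.+1 -> V) -> R,
         linf_A_inv adj act f1 -> linf_A_inv adj act f2 ->
         (forall y, restrict_to_line l f1 y = restrict_to_line l f2 y) -> forall x, f1 x = f2 x) &
      (forall F : ('I_n.+1 -> line_vertex l) -> R, linf_alt_inv act F ->
         exists f, linf_A_inv adj act f /\ forall y, restrict_to_line l f y = F y)].
Proof.
move=> _ Ht _ Ha _ Hinv Hl Hi Hii.
have [Hone Hmul Hadj] := Ha.
split.
- move=> f [[M hM] halt hal hinv]; split.
  + by exists M => y; apply: hM.
  + by move=> s y; apply: (halt s (fun i => proj1_sig (y i))).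
  + move=> h hst y z hz; rewrite /restrict_to_line.
    have -> : (fun i => proj1_sig (z i)) = (fun i => act h (proj1_sig (y i))).
      by apply: boolp.funext => i; apply: hz.
    exact: hinv.
- move=> f1 f2 [_ _ hal1 hinv1] [_ _ hal2 hinv2] hres x.
  have [[a [b hab]]|nal] := pselect (aligned adj x); last by rewrite hal1 // hal2.
  have [g hg] := Hi a b.
  have hx : forall i, on_line l (act g (x i)) by move=> i; apply: hg; apply: seg_act.
  rewrite -(hinv1 g x) -(hinv2 g x).
  exact: (hres (fun i => exist _ (act g (x i)) (hx i))).
- move=> F [[M hM] haltF hinvF].
  pose P x := exists g : G, forall i : 'I_n.+1, on_line l (act g (x i)).
  pose f x := match pselect (P x) with
    | left p => F (fun i => exist (on_line l) (act (proj1_sig (cid p)) (x i))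
                                    (proj2_sig (cid p) i))
    | right _ => 0 end.
  have Fext : forall y z : 'I_n.+1 -> line_vertex l,
      (forall i, proj1_sig (z i) = proj1_sig (y i)) -> F z = F y.
    move=> y z hz; apply: (hinvF monoid.one) => [v|i]; first by rewrite Hone.
    by rewrite Hone hz.
  have claimF : forall x (g g' : G) (hg : forall i, on_line l (act g (x i)))
      (hg' : forall i, on_line l (act g' (x i))),
      F (fun i => exist (on_line l) (act g' (x i)) (hg' i)) =
      F (fun i => exist (on_line l) (act g (x i)) (hg i)).
    move=> x g g' hg hg'.
    have hu : forall i, on_line l (act (monoid.mul g' (monoid.inv g)) (act g (x i))).
      by move=> i; rewrite Hmul (act_invK Ha).
    have [h [hst hh]] := wd Ht Hl Ha Hinv Hi Hii hg hu.
    apply: (hinvF h hst) => i /=.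
    by rewrite hh Hmul (act_invK Ha).
  have fE : forall x (g : G) (hg : forall i, on_line l (act g (x i))),
      f x = F (fun i => exist (on_line l) (act g (x i)) (hg i)).
    move=> x g hg; rewrite /f; case: pselect => [p|np]; first exact: claimF.
    by exfalso; apply: np; exists g.
  have f0 : forall x, ~ P x -> f x = 0.
    by move=> x np; rewrite /f; case: pselect.
  exists f; split; first split.
  + exists `|M| => x; rewrite /f; case: pselect => [p|_].
      exact: (le_trans (hM _) (ler_norm M)).
    by rewrite normr0.
  + move=> s x; have [[g hg]|np] := pselect (P x).
      have hg' : forall i, on_line l (act g (x (s i))) by move=> i; apply: hg.
      rewrite (fE _ g hg') (fE _ g hg).
      have := haltF s (fun i => exist (on_line l) (act g (x i)) (hg i)); rewrite /=.
      move=> <-; apply: Fext => i //.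
    rewrite f0 // ?f0 // ?mulr0 //.
    move=> [g hg]; apply: np; exists g => i.
    by have := hg (perm_inv s i); rewrite permKV.
  + move=> x nal; apply: f0 => -[g hg]; apply: nal; exact: line_aligned Ht Hl Ha n x g hg.
  + move=> k x; have [[g hg]|np] := pselect (P x).
      have hg' : forall i, on_line l (act (monoid.mul g (monoid.inv k)) (act k (x i))).
        by move=> i; rewrite Hmul (act_invK Ha).
      rewrite (fE _ _ hg') (fE _ g hg); apply: Fext => i /=.
      by rewrite Hmul (act_invK Ha).
    rewrite !f0 //.
    move=> [g hg]; apply: np; exists (monoid.mul g k) => i.
    by rewrite Hmul; apply: hg.
  + move=> y; rewrite /restrict_to_line.
    have hg : forall i, on_line l (act monoid.one (proj1_sig (y i))).
      by move=> i; rewrite Hone; exact: proj2_sig (y i).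
    rewrite (fE _ _ hg); apply: Fext => i /=.
    by rewrite Hone.
Qed.
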